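(* Let $A\subseteq\mathbb{N}$ be an essential $\mathcal{CR}$-set in $(\mathbb{N},+)$ and let $l\in\mathbb{N}$. Then the set $$\{(a,b)\in\mathbb{N}\times\mathbb{N}:\ \{a,a+b,a+2b,\ldots,a+lb\}\subseteq A\}$$ is an essential $\mathcal{CR}$-set in $(\mathbb{N}\times\mathbb{N},+)$ (with coordinatewise addition).
   Context: For a commutative semigroup $(S,+)$ and $r,n\in\mathbb{N}$, let $S^{r\times n}$ denote the set of $r\times n$ matrices with entries in $S$; for $M=(M_{ij})\in S^{r\times n}$ and non-empty $\alpha\subseteq\{1,\ldots,r\}$ write $M_{\alpha j}=\sum_{i\in\alpha}M_{ij}$. A subset $A\subseteq S$ is a $\mathcal{CR}$-set if for every $n\in\mathbb{N}$ there exists $r\in\mathbb{N}$ such that for every $M\in S^{r\times n}$ there exist a non-empty $\alpha\subseteq\{1,\ldots,r\}$ and $s\in S$ with $s+M_{\alpha j}\in A$ for all $j\in\{1,\ldots,n\}$. Let $\beta S$ be the Stone–Čech compactification of the discrete semigroup $S$, viewed as the set of ultrafilters on $S$, with the extended operation given by: for $p,q\in\beta S$ and $B\subseteq S$, $B\in p+q$ iff $\{x\in S:-x+B\in q\}\in p$, where $-x+B=\{y\in S:x+y\in B\}$. Let $\beta(\mathcal{CR})=\{p\in\beta S:\text{every member of }p\text{ is a }\mathcal{CR}\text{-set}\}$; this is a closed subsemigroup of $\beta S$. A set $A\subseteq S$ is an essential $\mathcal{CR}$-set if $A\in p$ for some idempotent $p=p+p$ in $\beta(\mathcal{CR})$.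 *)

(* Defs.v *)
From mathcomp Require Import all_boot.
From Stdlib Require Import PArith.
Set Implicit Arguments. Unset Strict Implicit. Unset Printing Implicit Defensive.

Section Semigroup.
Variables (S : Type) (add : S -> S -> S).

(* Sum over a non-empty finite set alpha of row indices of f i, for a
   commutative semigroup (no neutral element): f i0 + f i1 + ... + f ik where
   enum alpha = [:: i0; ...; ik].  The default d is only used when alpha is
   empty, which never happens in the definitions below. *)
Definition alpha_sum (r : nat) (d : S) (f : 'I_r -> S) (alpha : {set 'I_r}) : S :=
  match enum alpha with
  | [::] => d
  | i :: t => foldl (fun acc k => add acc (f k)) (f i) t
  end.

Definition CR_set (A : S -> Prop) : Prop :=
  forall n : nat, exists r : nat, forall M : 'I_r -> 'I_n -> S,
    exists (alpha : {set 'I_r}) (s : S),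
      alpha != set0 /\
      forall j : 'I_n, A (add s (alpha_sum s (fun i => M i j) alpha)).

Definition ultrafilter (p : (S -> Prop) -> Prop) : Prop :=
  [/\ p (fun _ => True),
      ~ p (fun _ => False),
      (forall B C : S -> Prop, p B -> (forall x, B x -> C x) -> p C),
      (forall B C : S -> Prop, p B -> p C -> p (fun x => B x /\ C x))
    & (forall B : S -> Prop, p B \/ p (fun x => ~ B x))].

Definition ultra_add (p q : (S -> Prop) -> Prop) : (S -> Prop) -> Prop :=
  fun B => p (fun x => q (fun y => B (add x y))).

Definition ultra_idempotent (p : (S -> Prop) -> Prop) : Prop :=
  forall B : S -> Prop, ultra_add p p B <-> p B.

Definition in_beta_CR (p : (S -> Prop) -> Prop) : Prop :=
  ultrafilter p /\ forall B : S -> Prop, p B -> CR_set B.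

Definition essential_CR_set (A : S -> Prop) : Prop :=
  exists p : (S -> Prop) -> Prop,
    [/\ in_beta_CR p, ultra_idempotent p & p A].

End Semigroup.

Definition pos_pair_add (x y : positive * positive) : positive * positive :=
  ((x.1 + y.1)%positive, (x.2 + y.2)%positive).

(* Main.v *)
Require Import Defs.
From mathcomp Require Import all_boot.
From Stdlib Require Import PArith.
From Stdlib Require Import Lia Classical.
From mathcomp Require Import zify.
From mathcomp Require boolp classical_sets filter.
Set Implicit Arguments. Unset Strict Implicit. Unset Printing Implicit Defensive.

(* Proof outline: Hales-Jewett => partition regularity of CR-sets in N x N;
   Zorn (mathcomp-classical) => ultrafilter lemma and Ellis-Numakura for closed subsemigroups;
   then an idempotent in beta(CR) containing all C_B (B in p) is produced. *)


Section HJ.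

Definition lpt N k (lam : {ffun 'I_N -> option 'I_k}) (x : 'I_k) : {ffun 'I_N -> 'I_k} :=
  [ffun i => odflt x (lam i)].

Definition isline N k (lam : {ffun 'I_N -> option 'I_k}) := exists i, lam i = None.

Definition HJ_stmt k := forall r, exists N, forall (C : finType), #|C| <= r ->
  forall chi : {ffun 'I_N -> 'I_k.+1} -> C,
  exists lam, isline lam /\ forall x y, chi (lpt lam x) = chi (lpt lam y).

Lemma HJ0 : HJ_stmt 0.
Proof.
move=> r; exists 1 => C _ chi; exists [ffun _ => None]; split.
  by exists ord0; rewrite ffunE.
by move=> x y; rewrite (ord1 x) (ord1 y).
Qed.

Definition catw (T : Type) m n (a : {ffun 'I_m -> T}) (b : {ffun 'I_n -> T}) :
  {ffun 'I_(m + n) -> T} :=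
  [ffun i => match split i with inl j => a j | inr j => b j end].

Lemma lpt_cat m n k (mu : {ffun 'I_m -> option 'I_k}) (nu : {ffun 'I_n -> option 'I_k}) x :
  lpt (catw mu nu) x = catw (lpt mu x) (lpt nu x).
Proof. by apply/ffunP => i; rewrite !ffunE; case: (split i) => j; rewrite !ffunE. Qed.

Lemma isline_catl m n k (mu : {ffun 'I_m -> option 'I_k}) (nu : {ffun 'I_n -> option 'I_k}) :
  isline mu -> isline (catw mu nu).
Proof.
case=> j hj; exists (lshift n j); rewrite ffunE.
by have /= -> := unsplitK (inl _ j : 'I_m + 'I_n).
Qed.

Lemma isline_catr m n k (mu : {ffun 'I_m -> option 'I_k}) (nu : {ffun 'I_n -> option 'I_k}) :
  isline nu -> isline (catw mu nu).
Proof.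
case=> j hj; exists (rshift m j); rewrite ffunE.
by have /= -> := unsplitK (inr _ j : 'I_m + 'I_n).
Qed.

Definition fsome N k (a : {ffun 'I_N -> 'I_k}) : {ffun 'I_N -> option 'I_k} :=
  [ffun i => Some (a i)].

Lemma lpt_fsome N k (a : {ffun 'I_N -> 'I_k}) x : lpt (fsome a) x = a.
Proof. by apply/ffunP => i; rewrite !ffunE. Qed.

Lemma leq_expl m n e : m <= n -> m ^ e <= n ^ e.
Proof. by move=> h; elim: e => // e IH; rewrite !expnS leq_mul. Qed.

Definition wid k (x : 'I_k.+1) : 'I_k.+2 := widen_ord (leqnSn _) x.

Lemma wid_neq k (x : 'I_k.+2) : x != ord_max -> exists x0, x = wid x0.
Proof.
move=> h; have hx : x < k.+1.
  by move: (ltn_ord x) h; rewrite ltnS leq_eqVlt => /orP[/eqP e|//]; rewrite -(inj_eq val_inj) /= e eqxx.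
by exists (Ordinal hx); apply/val_inj.
Qed.

Definition Focus k r s := exists N, forall (C : finType), #|C| <= r ->
  forall chi : {ffun 'I_N -> 'I_k.+2} -> C,
  (exists lam, isline lam /\ forall x y, chi (lpt lam x) = chi (lpt lam y)) \/
  (exists (lam : nat -> {ffun 'I_N -> option 'I_k.+2}) (f : {ffun 'I_N -> 'I_k.+2}),
     (forall i, i < s -> [/\ isline (lam i), lpt (lam i) ord_max = f &
          forall x y, x != ord_max -> y != ord_max -> chi (lpt (lam i) x) = chi (lpt (lam i) y)])
     /\ (forall i j, i < s -> j < s -> chi (lpt (lam i) ord0) = chi (lpt (lam j) ord0) -> i = j)).

Lemma Focus0 k r : Focus k r 0.
Proof.
exists 0 => C _ chi; right; exists (fun _ => [ffun _ => None]), [ffun _ => ord0]; split => //.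
Qed.

Lemma FocusS k r s : HJ_stmt k -> Focus k r s -> Focus k r s.+1.
Proof.
move=> HJk [Ns HNs].
pose W := {ffun 'I_Ns -> 'I_k.+2}.
have [m Hm] := HJk (r ^ #|{: W}|).
exists (m + Ns) => C hC chi.
pose widw (a : {ffun 'I_m -> 'I_k.+1}) : {ffun 'I_m -> 'I_k.+2} := [ffun i => wid (a i)].
pose chi1 (a : {ffun 'I_m -> 'I_k.+1}) : {ffun W -> C} := [ffun b => chi (catw (widw a) b)].
have hC1 : #|{: {ffun W -> C}}| <= r ^ #|{: W}| by rewrite card_ffun leq_expl.
have [mu [lmu monomu]] := Hm _ hC1 chi1.
pose mu' : {ffun 'I_m -> option 'I_k.+2} := [ffun i => omap (@wid k) (mu i)].
have lptmu x0 : lpt mu' (wid x0) = widw (lpt mu x0).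
  by apply/ffunP => i; rewrite !ffunE; case: (mu i).
have key x y b : x != ord_max -> y != ord_max ->
    chi (catw (lpt mu' x) b) = chi (catw (lpt mu' y) b).
  move=> /wid_neq [x0 ->] /wid_neq [y0 ->]; rewrite !lptmu.
  have := congr1 (fun F : {ffun W -> C} => F b) (monomu x0 y0); by rewrite !ffunE.
have o0 : (ord0 : 'I_k.+2) != ord_max by rewrite -(inj_eq val_inj).
pose a0 := lpt mu' ord0.
pose chi' (b : W) := chi (catw a0 b).
have lmu' : isline mu'.
  by case: lmu => j hj; exists j; rewrite ffunE hj.
have [[nu [lnu mononu]]|[lam [f [Hlam Hinj]]]] := HNs C hC chi'.
  left; exists (catw (fsome a0) nu); split; first exact: isline_catr.
  by move=> x y; rewrite !lpt_cat !lpt_fsome; apply: mononu.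
have [/existsP [i hfi]|nofi] := boolP [exists i : 'I_s, chi' f == chi' (lpt (lam i) ord0)].
  - left; exists (catw (fsome a0) (lam i)); split.
      by apply: isline_catr; have [] := Hlam i (ltn_ord i).
    have [_ hf hm] := Hlam i (ltn_ord i).
    have col x : chi' (lpt (lam i) x) = chi' (lpt (lam i) ord0).
      have [->|xn] := eqVneq x ord_max; first by rewrite hf (eqP hfi).
      exact: hm.
    by move=> x y; rewrite !lpt_cat !lpt_fsome; have := col x; have := col y;
      rewrite /chi' => -> ->.
  - right.
    exists (fun i => if i < s then catw mu' (lam i) else catw mu' (fsome f)).
    exists (catw (lpt mu' ord_max) f).
    have nof i : i < s -> chi' f != chi' (lpt (lam i) ord0).
      move=> hi; apply/negP => e; move/negP: nofi; apply.
      by apply/existsP; exists (Ordinal hi).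
    have col0 i : i < s.+1 -> chi (lpt (if i < s then catw mu' (lam i) else catw mu' (fsome f)) ord0)
        = if i < s then chi' (lpt (lam i) ord0) else chi' f.
      by move=> _; case: ifP => _; rewrite lpt_cat ?lpt_fsome.
    split.
      move=> i; rewrite ltnS leq_eqVlt => /orP[/eqP ->|hi].
        rewrite ltnn; split; first exact: isline_catl.
          by rewrite lpt_cat lpt_fsome.
        by move=> x y hx hy; rewrite !lpt_cat !lpt_fsome (key x ord0) // (key y ord0).
      rewrite hi; have [l1 l2 l3] := Hlam i hi; split; first exact: isline_catl.
        by rewrite lpt_cat l2.
      move=> x y hx hy; rewrite !lpt_cat (key x ord0) // (key y ord0) //.
      exact: l3.
    move=> i j hi hj; rewrite (col0 i hi) (col0 j hj).
    move: hi hj; rewrite ltnS leq_eqVlt => /orP[/eqP ->|hi];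
      rewrite ltnS leq_eqVlt => /orP[/eqP ->|hj]; rewrite ?ltnn ?hi ?hj //.
    + by move=> e; move: (nof j hj); rewrite e eqxx.
    + by move=> e; move: (nof i hi); rewrite e eqxx.
    + exact: Hinj.
Qed.

Lemma HJS k : HJ_stmt k -> HJ_stmt k.+1.
Proof.
move=> HJk r.
have : Focus k r r.
  have gen s : Focus k r s by elim: s => [|s IH]; [exact: Focus0| exact: FocusS].
  exact: gen.
move=> [N HN]; exists N => C hC chi.
have [//|[lam [f [Hlam Hinj]]]] := HN C hC chi.
pose g (i : 'I_r) := chi (lpt (lam i) ord0).
have ginj : injective g.
  by move=> i j e; apply/val_inj/Hinj => //; apply: ltn_ord.
have : chi f \in codom g.
  by apply: inj_card_onto => //; rewrite card_ord.
move=> /codomP [i hi].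
have [l1 l2 l3] := Hlam i (ltn_ord i).
have o0 : (ord0 : 'I_k.+2) != ord_max by rewrite -(inj_eq val_inj).
have col x : chi (lpt (lam i) x) = g i.
  have [->|xn] := eqVneq x ord_max; first by rewrite l2.
  exact: l3.
by exists (lam i); split => // x y; rewrite !col.
Qed.

Lemma HJ k : HJ_stmt k.
Proof. elim: k => [|k IH]; [exact: HJ0 | exact: HJS]. Qed.

End HJ.



Module EllisM.
Import boolp classical_sets filter.

Section Ultra.
Variable S : Type.
Implicit Types (u v w : (S -> Prop) -> Prop) (F : (S -> Prop) -> Prop).

Fixpoint interl (l : seq (S -> Prop)) (x : S) : Prop :=
  match l with [::] => True | C :: l' => C x /\ interl l' x end.
Fixpoint allin F (l : seq (S -> Prop)) : Prop :=
  match l with [::] => True | C :: l' => F C /\ allin F l' end.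

Definition FIP F := forall l, allin F l -> exists x, interl l x.
Definition UF F u := ultrafilter u /\ forall D, F D -> u D.

Lemma uf_T u : ultrafilter u -> u (fun _ => True).
Proof. by case. Qed.
Lemma uf_S u (B C : S -> Prop) : ultrafilter u -> u B -> (forall x, B x -> C x) -> u C.
Proof. by case=> _ _ h _ _; apply: h. Qed.
Lemma uf_I u (B C : S -> Prop) : ultrafilter u -> u B -> u C -> u (fun x => B x /\ C x).
Proof. by case=> _ _ _ h _; apply: h. Qed.
Lemma uf_F u : ultrafilter u -> ~ u (fun _ => False).
Proof. by case. Qed.
Lemma uf_ne u (B : S -> Prop) : ultrafilter u -> u B -> exists x, B x.
Proof.
move=> hu hB; apply: contrapT => hn; apply: (uf_F hu); apply: (uf_S hu hB) => x Bx.
by apply: hn; exists x.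
Qed.
Lemma uf_C u (B : S -> Prop) : ultrafilter u -> ~ u B -> u (fun x => ~ B x).
Proof. by case=> _ _ _ _ h hn; case: (h B). Qed.
Lemma uf_nC u (B : S -> Prop) : ultrafilter u -> u B -> ~ u (fun x => ~ B x).
Proof.
move=> hu hB hC; apply: (uf_F hu); apply: (uf_S hu (uf_I hu hB hC)) => x [].
by move=> a b; apply: b.
Qed.
Lemma uf_sub u v : ultrafilter u -> ultrafilter v -> (forall B, u B -> v B) ->
  forall B, v B -> u B.
Proof.
move=> hu hv h B vB; apply: contrapT => nu.
exact: (uf_nC hv vB (h _ (uf_C hu nu))).
Qed.
Lemma uf_sub_eq u v : ultrafilter u -> ultrafilter v -> (forall B, u B -> v B) -> u = v.
Proof.
move=> hu hv h; apply: funext => B; apply: propext; split; first exact: h.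
exact: uf_sub.
Qed.
Lemma uf_interl u l : ultrafilter u -> allin u l -> u (interl l).
Proof.
move=> hu; elim: l => [|C l IH] /=; first by move=> _; exact: uf_T.
by move=> [hC hl]; apply: uf_I => //; exact: IH.
Qed.
Lemma allin_mono F G l : (forall D, F D -> G D) -> allin F l -> allin G l.
Proof. by move=> h; elim: l => //= C l IH [hC hl]; split; [apply: h|apply: IH]. Qed.
Lemma allin_cat F l1 l2 : allin F l1 -> allin F l2 -> allin F (l1 ++ l2).
Proof. by elim: l1 => //= C l IH [] ? ? ?; split => //; apply: IH. Qed.
Lemma interl_cat l1 l2 x : interl (l1 ++ l2) x -> interl l1 x /\ interl l2 x.
Proof. by elim: l1 => //= C l IH [] ? /IH []. Qed.

Definition gen F : set_system S :=
  fun B => exists l, allin F l /\ forall x, interl l x -> B x.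

Lemma FIP_UF F : FIP F -> exists u, UF F u.
Proof.
move=> hF.
have PF : ProperFilter (gen F).
  split.
  - move=> [l [hl hx]]; have [x hx'] := hF l hl; exact: hx x hx'.
  - split.
    + by exists [::].
    + move=> A B [l1 [h1 e1]] [l2 [h2 e2]]; exists (l1 ++ l2); split.
        exact: allin_cat.
      by move=> x /interl_cat [/e1 ? /e2 ?].
    + move=> P Q PQ [l [h e]]; exists l; split => // x /e; exact: PQ.
have [G [UG FG]] := ultraFilterLemma PF.
have FiG : Filter G by case: UG => [[]].
exists G; split; last first.
  move=> D FD; apply: FG; exists [:: D]; split => //=; by move=> x [].
split.
- exact: (@filterT _ G FiG).
- by move=> h; apply: (@filter_not_empty _ G _).
- by move=> B C GB BC; apply: (@filterS _ G FiG B C).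
- by move=> B C GB GC; apply: (@filterI _ G FiG B C).
- by move=> B; apply: in_ultra_setVsetC.
Qed.

Section Add.
Variable add : S -> S -> S.
Hypothesis addA : forall x y z, add x (add y z) = add (add x y) z.
Local Notation "u +u v" := (ultra_add add u v) (at level 50, left associativity).

Lemma uf_add u v : ultrafilter u -> ultrafilter v -> ultrafilter (u +u v).
Proof.
move=> hu hv; rewrite /ultra_add; split.
- by apply: (uf_S hu (uf_T hu)) => x _; apply: uf_T.
- move=> h; have [x hx] := uf_ne hu h; exact: uf_F hv hx.
- move=> B C hB hBC; apply: (uf_S hu hB) => x hx; apply: (uf_S hv hx) => y; exact: hBC.
- move=> B C hB hC; apply: (uf_S hu (uf_I hu hB hC)) => x [h1 h2]; exact: uf_I.
- move=> B; have [_ _ _ _ hU] := hu; case: (hU (fun x => v (fun y => B (add x y)))) => [h|h]; [left|right] => //.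
  by apply: (uf_S hu h) => x hx; apply: uf_C.
Qed.

Lemma ultra_addA u v w : u +u (v +u w) = (u +u v) +u w.
Proof.
rewrite /ultra_add; apply: funext => B; congr u; apply: funext => x.
congr v; apply: funext => y; congr w; apply: funext => z; by rewrite addA.
Qed.

Definition SG F := forall u v, UF F u -> UF F v -> UF F (u +u v).

Definition unionF F (X : set (S -> Prop)) : (S -> Prop) -> Prop := fun D => F D \/ X D.

Theorem ellis F : (exists u, UF F u) -> SG F -> exists q, UF F q /\ ultra_idempotent add q.
Proof.
move=> NEF SGF.
pose P := fun X : set (S -> Prop) => (exists u, UF (unionF F X) u) /\ SG (unionF F X).
have [Am [[[q Uq] SGAm] Amax]] : exists A, P A /\ forall B, (A `<` B)%classic -> ~ P B.
  apply: Zorn_bigcup => Fam FamP Famtot.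
  have hl l : allin (unionF F (\bigcup_(X in Fam) X)%classic) l ->
     exists X, (X = set0 \/ Fam X) /\ allin (unionF F X) l.
    elim: l => [|D l IH] /=; first by move=> _; exists set0; split; [left|].
    move=> [hD /IH [X [hX hl]]]; case: hD => [FD|[Y FamY YD]].
      by exists X; split => //; split => //; left.
    case: hX => [eX|FamX].
      subst X; exists Y; split; first by right.
      split; first by right.
      by apply: allin_mono hl => E [?|//]; left.
    have [XY|YX] := Famtot _ _ FamX FamY.
      exists Y; split; first by right.
      split; first by right.
      by apply: allin_mono hl => E [?|?]; [left|right; apply: XY].
    exists X; split; first by right.
    by split => //; right; apply: YX.
  have toX u X : Fam X -> UF (unionF F (\bigcup_(X in Fam) X)%classic) u -> UF (unionF F X) u.
    move=> FamX [hu huU]; split => // D [FD|XD]; apply: huU; [left|right] => //.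
    by exists X.
  split.
  - apply: FIP_UF => l /hl [X [hX hlX]].
    have [u [hu huX]] : exists u, UF (unionF F X) u.
      case: hX => [eX|FamX]; last by case: (FamP _ FamX).
      subst X; have [u [hu huF]] := NEF; exists u; split => // D [FD|[]]; exact: huF.
    by apply: (uf_ne hu); apply: uf_interl => //; apply: allin_mono hlX.
  - move=> u v Uu Uv; split; first by apply: uf_add; [case: Uu|case: Uv].
    move=> D [FD|[X FamX XD]].
      have h w : UF (unionF F (\bigcup_(X in Fam) X)%classic) w -> UF F w.
        by move=> [hw hwU]; split => // E FE; apply: hwU; left.
      by have [_ hh] := SGF _ _ (h _ Uu) (h _ Uv); apply: hh.
    have [_ SGX] := FamP _ FamX.
    by have [_ hh] := SGX _ _ (toX _ _ FamX Uu) (toX _ _ FamX Uv); apply: hh; right.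
pose T := unionF F Am.
have maxim : forall G : (S -> Prop) -> Prop,
    (exists u, UF T u /\ forall D, G D -> u D) ->
    (forall u v, UF T u -> (forall D, G D -> u D) -> UF T v -> (forall D, G D -> v D) ->
       forall D, G D -> (u +u v) D) ->
    forall D, G D -> Am D.
  move=> G [u [Uu uG]] hSG D GD; apply: contrapT => nAD.
  apply: (Amax (fun E => Am E \/ G E)).
    split; first by move=> E AE; left.
    by move=> h; apply: nAD; exact: (h D (or_intror GD)).
  have spl w : UF (unionF F (fun E => Am E \/ G E)) w <-> UF T w /\ forall D, G D -> w D.
    split.
      move=> [hw hwU]; split; last by move=> E GE; apply: hwU; right; right.
      by split => // E [FE|AE]; apply: hwU; [left|right; left].
    move=> [[hw hwT] hwG]; split => // E [FE|[AE|GE]]; last exact: hwG.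
      by apply: hwT; left.
    by apply: hwT; right.
  split.
    by exists u; apply/spl.
  move=> v w /spl [Uv vG] /spl [Uw wG]; apply/spl; split; first exact: SGAm.
  exact: hSG.
have hq : ultrafilter q by case: Uq.
pose hat (D : S -> Prop) := fun z => q (fun b => D (add z b)).
pose G1 := fun D : S -> Prop => forall x, UF T x -> (x +u q) D.
have compact : forall w, ultrafilter w -> (forall D, G1 D -> w D) ->
    exists y, UF T y /\ w = y +u q.
  move=> w hw wG1.
  pose H := fun E : S -> Prop => T E \/ exists D, w D /\ forall z, hat D z -> E z.
  have hH : forall l, allin H l -> exists D, w D /\ exists l', allin T l' /\
      forall z, interl l' z -> hat D z -> interl l z.
    elim=> [|E l IH] /=.
      by move=> _; exists (fun _ => True); split; [exact: uf_T|exists [::]].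
    move=> [[TE|[D0 [wD0 hD0]]] /IH [D [wD [l' [hl' hz]]]]].
      exists D; split => //; exists (E :: l'); split => //=.
      by move=> z [Ez iz] hDz; split => //; apply: hz.
    exists (fun x => D x /\ D0 x); split; first exact: uf_I.
    exists l'; split => // z iz hDz; split.
      by apply: hD0; apply: (uf_S hq hDz) => b [].
    by apply: hz => //; apply: (uf_S hq hDz) => b [].
  have [y [hy yH]] : exists y, UF H y.
    apply: FIP_UF => l /hH [D [wD [l' [hl' hz]]]].
    have [y [hy yT]] : exists y, UF T y /\ y (hat D).
      apply: contrapT => hn.
      have : G1 (fun x => ~ D x).
        move=> x [hx xT]; have nx : ~ x (hat D) by move=> h; apply: hn; exists x.
        apply: (uf_S hx (uf_C hx nx)) => z nz; exact: uf_C.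
      by move=> /wG1 wnD; exact: (uf_nC hw wD wnD).
    have [hy1 hy2] := hy.
    have := uf_I hy1 (uf_interl hy1 (allin_mono hy2 hl')) yT.
    move=> /(uf_ne hy1) [z [iz hz']]; exists z; exact: hz.
  exists y; split.
    by split => // E TE; apply: yH; left.
  apply: uf_sub_eq => //; first exact: uf_add.
  move=> D wD; rewrite /ultra_add; apply: yH; right; exists D; split => //.
have G1A : forall D, G1 D -> Am D.
  apply: maxim.
    exists (q +u q); split; first exact: SGAm.
    by move=> D hD; apply: hD.
  move=> u v Uu uG1 Uv vG1 D G1D.
  have [y [Uy ->]] := compact v (proj1 Uv) vG1.
  rewrite ultra_addA; apply: G1D; exact: SGAm.
have qT : forall D, T D -> q D by case: Uq.
have qG1 : forall D, G1 D -> q D by move=> D /G1A AD; apply: qT; right.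
have [y0 [Uy0 qe]] := compact q hq qG1.
pose G2 := fun E : S -> Prop => exists D, q D /\ forall z, hat D z -> E z.
have G2u : forall u, ultrafilter u -> (forall E, G2 E -> u E) -> u +u q = q.
  move=> u hu uG2; apply: esym; apply: uf_sub_eq => //; first exact: uf_add.
  move=> D qD; rewrite /ultra_add; apply: uG2; exists D; split => //.
have uG2 : forall u, ultrafilter u -> u +u q = q -> forall E, G2 E -> u E.
  move=> u hu e E [D [qD hD]]; rewrite -e /ultra_add in qD.
  exact: (uf_S hu qD).
have G2A : forall E, G2 E -> Am E.
  apply: maxim.
    exists y0; split => //; apply: uG2; [by case: Uy0|by rewrite -qe].
  move=> u v Uu uG Uv vG E G2E; apply: uG2 => //.
    by apply: uf_add; [case: Uu|case: Uv].
  rewrite -ultra_addA (G2u v) ?(G2u u) //; [by case: Uu|by case: Uv].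
have qq : q +u q = q by apply: G2u => // E /G2A AE; apply: qT; right.
exists q; split.
  by split => // D FD; apply: qT; left.
by move=> B; rewrite qq.
Qed.

End Add.
End Ultra.

End EllisM.
Import EllisM.


Section Sums.
Variables (S : Type) (add : S -> S -> S).

Lemma sum_hom (c : S -> nat) (hc : forall x y, c (add x y) = c x + c y)
  r d (g : 'I_r -> S) (alpha : {set 'I_r}) :
  alpha != set0 -> c (alpha_sum add d g alpha) = \sum_(i in alpha) c (g i).
Proof.
move=> ha; rewrite /alpha_sum -big_enum.
case E: (enum alpha) => [|i t] /=.
  by move: ha; rewrite -cards_eq0 cardE E.
rewrite big_cons; clear E.
elim: t (g i) => [|k t IH] a /=; first by rewrite big_nil addn0.
by rewrite IH hc big_cons addnA.
Qed.
Lemma alpha_sum_d r d d' (g : 'I_r -> S) (alpha : {set 'I_r}) :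
  alpha != set0 -> alpha_sum add d g alpha = alpha_sum add d' g alpha.
Proof.
move=> ha; rewrite /alpha_sum; case E: (enum alpha) => [|i t] //.
by move: ha; rewrite -cards_eq0 cardE E.
Qed.
End Sums.

Section CRgen.
Variables (S : Type) (add : S -> S -> S) (s0 : S).
Hypothesis addA : forall x y z, add x (add y z) = add (add x y) z.
Hypothesis addC : forall x y, add x y = add y x.

Lemma CR_mono (B C : S -> Prop) : CR_set add B -> (forall x, B x -> C x) -> CR_set add C.
Proof.
move=> hB hBC n; have [r hr] := hB n; exists r => M.
have [al [s [ha hs]]] := hr M; exists al, s; split => // j; exact: hBC.
Qed.

Lemma CR_ne (B : S -> Prop) : CR_set add B -> exists x, B x.
Proof.
move=> hB; have [r hr] := hB 1; have [al [s [_ hs]]] := hr (fun _ _ => s0).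
by eexists; apply: (hs ord0).
Qed.

Lemma interl_map (T : eqType) (E : T -> S -> Prop) (s : seq T) y :
  interl [seq E j | j <- s] y -> forall j, j \in s -> E j y.
Proof.
elim: s => //= a s IH [h1 h2] j; rewrite in_cons => /orP[/eqP ->//|hj]; exact: IH.
Qed.

Lemma allin_map (T : Type) (u : (S -> Prop) -> Prop) (E : T -> S -> Prop) (s : seq T) :
  (forall j, u (E j)) -> allin u [seq E j | j <- s].
Proof. by move=> h; elim: s => //= a s ->; split. Qed.

Lemma uf_fin (u : (S -> Prop) -> Prop) n (E : 'I_n -> S -> Prop) :
  ultrafilter u -> (forall j, u (E j)) -> u (fun y => forall j, E j y).
Proof.
move=> hu h; apply: (uf_S hu (uf_interl hu (allin_map (enum 'I_n) h))).
move=> y hy j; apply: (interl_map hy); by rewrite mem_enum.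
Qed.

Lemma CR_sum (u v : (S -> Prop) -> Prop) : ultrafilter u -> (forall B, u B -> CR_set add B) ->
  ultrafilter v -> forall B, ultra_add add u v B -> CR_set add B.
Proof.
move=> hu uCR hv B huv n.
have [r hr] := uCR _ huv n; exists r => M.
have [al [s [ha hs]]] := hr M.
have := uf_fin hv hs; move=> /(uf_ne hv) [y hy].
exists al, (add s y); split => // j.
set m := alpha_sum _ _ _ _.
have e : add (add s y) m = add (add s m) y by rewrite -addA [add y m]addC addA.
by rewrite e /m (@alpha_sum_d _ add _ _ s _ _ ha); apply: hy.
Qed.
End CRgen.

Definition P2 := (positive * positive)%type.
Definition c1 (x : P2) := Pos.to_nat x.1.
Definition c2 (x : P2) := Pos.to_nat x.2.

Lemma c1_add x y : c1 (pos_pair_add x y) = c1 x + c1 y.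
Proof. by rewrite /c1 /= Pos2Nat.inj_add. Qed.
Lemma c2_add x y : c2 (pos_pair_add x y) = c2 x + c2 y.
Proof. by rewrite /c2 /= Pos2Nat.inj_add. Qed.
Lemma P2_eq (x y : P2) : c1 x = c1 y -> c2 x = c2 y -> x = y.
Proof. by case: x => a b; case: y => c d; rewrite /c1 /c2 /= => /Pos2Nat.inj -> /Pos2Nat.inj ->. Qed.
Lemma posadd_nat (x y : positive) : Pos.to_nat (x + y) = Pos.to_nat x + Pos.to_nat y.
Proof. exact: Pos2Nat.inj_add. Qed.
Lemma pos_gt0 (x : positive) : 0 < Pos.to_nat x.
Proof. by apply/ltP; apply: Pos2Nat.is_pos. Qed.
Lemma of_natK n : 0 < n -> Pos.to_nat (Pos.of_nat n) = n.
Proof. by move=> h; apply: Nat2Pos.id => e; move: h; rewrite e. Qed.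

Definition CB (l : positive) (B : positive -> Prop) (ab : P2) :=
  B ab.1 /\ forall i : positive, (i <= l)%positive -> B (ab.1 + i * ab.2)%positive.

Lemma CB_CR l B : CR_set Pos.add B -> CR_set pos_pair_add (CB l B).
Proof.
move=> hB n.
pose L := Pos.to_nat l.
pose K := ('I_n * 'I_L.+1)%type.
have [r hr] := hB #|{: K}|.
exists r => M.
pose val (i : 'I_r) (jt : K) := c1 (M i jt.1) + jt.2 * (c2 (M i jt.1) + 1).
pose M' i (c : 'I_#|{:K}|) := Pos.of_nat (val i (enum_val c)).
have hval i jt : Pos.to_nat (Pos.of_nat (val i jt)) = val i jt.
  by apply: of_natK; rewrite /val /c1; have := pos_gt0 (M i jt.1).1; lia.
have [al [s [ha hs]]] := hr M'.
have cal : 0 < #|al| by rewrite card_gt0.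
exists al, (s, Pos.of_nat #|al|); split => // j.
set X := pos_pair_add _ _.
have X1 : Pos.to_nat X.1 = Pos.to_nat s + \sum_(i in al) c1 (M i j).
  by rewrite /X /= posadd_nat -/(c1 _) (sum_hom c1_add).
have X2 : Pos.to_nat X.2 = #|al| + \sum_(i in al) c2 (M i j).
  by rewrite /X /= posadd_nat -/(c2 _) (sum_hom c2_add) // (of_natK cal).
have key (o : 'I_L.+1) : Pos.to_nat (s + alpha_sum Pos.add s (fun i => M' i (enum_rank (j, o))) al)
   = Pos.to_nat s + \sum_(i in al) c1 (M i j) + o * (#|al| + \sum_(i in al) c2 (M i j)).
  rewrite posadd_nat (sum_hom posadd_nat) //.
  under eq_bigr do rewrite /M' enum_rankK hval /val /=.
  rewrite big_split /= -big_distrr /= big_split /= sum1_card; by rewrite addnA [#|al| + _]addnC.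
split.
  suff -> : X.1 = (s + alpha_sum Pos.add s (fun i => M' i (enum_rank (j, ord0))) al)%positive.
    exact: hs.
  by apply: Pos2Nat.inj; rewrite X1 key /= mul0n addn0.
move=> i hi.
have ht : Pos.to_nat i < L.+1 by rewrite ltnS; apply/leP; apply/Pos2Nat.inj_le.
suff -> : (X.1 + i * X.2)%positive =
   (s + alpha_sum Pos.add s (fun k => M' k (enum_rank (j, Ordinal ht))) al)%positive.
  exact: hs.
apply: Pos2Nat.inj; rewrite key posadd_nat Pos2Nat.inj_mul X1 X2 /=; lia.
Qed.

Definition pb (P : Prop) : bool := if boolp.pselect P then true else false.
Lemma pbT (P : Prop) : pb P = true -> P.
Proof. by rewrite /pb; case: boolp.pselect. Qed.
Lemma pbF (P : Prop) : pb P = false -> ~ P.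
Proof. by rewrite /pb; case: boolp.pselect. Qed.

Lemma notCR (S : Type) (add : S -> S -> S) (B : S -> Prop) : ~ CR_set add B ->
  exists n, forall r, exists M : 'I_r -> 'I_n -> S, forall al s, al != set0 ->
    ~ (forall j, B (add s (alpha_sum add s (fun i => M i j) al))).
Proof.
move=> h; apply: NNPP => h1; apply: h => n; apply: NNPP => h2; apply: h1; exists n => r.
apply: NNPP => h3; apply: h2; exists r => M; apply: NNPP => h4; apply: h3.
by exists M => al s hal hB; apply: h4; exists al, s.
Qed.

Lemma CR_union (B1 B2 : P2 -> Prop) :
  CR_set pos_pair_add (fun x => B1 x \/ B2 x) ->
  CR_set pos_pair_add B1 \/ CR_set pos_pair_add B2.
Proof.
move=> hU; apply: NNPP => hn.
have [nB1 nB2] : ~ CR_set pos_pair_add B1 /\ ~ CR_set pos_pair_add B2.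
  by split => h; apply: hn; [left|right].
have [n1 H1] := notCR nB1; have [n2 H2] := notCR nB2.
pose s0 : P2 := (1%positive, 1%positive).
destruct n1 as [|n1].
  have [M1 hM1] := H1 1; apply: (hM1 setT s0).
    by rewrite -cards_eq0 cardsT card_ord.
  by move=> [m hm]; exfalso; rewrite ltn0 in hm.
have [N HN] := HJ (n1 + n2) 2.
have N0 : 0 < N.
  have [lam0 [[i0 _] _]] := HN bool (eq_leq card_bool) (fun _ => true).
  exact: (leq_ltn_trans (leq0n i0) (ltn_ord i0)).
pose W := {ffun 'I_N -> 'I_(n1 + n2).+1}.
have [r' hr'] := hU #|{: W}|.
pose RowT := ('I_r' * 'I_N)%type.
pose R := #|{: RowT}|.
have [M1 hM1] := H1 R; have [M2 hM2] := H2 R.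
pose M (k : 'I_R) (x : 'I_(n1.+1 + n2)) : P2 :=
  match split x with inl j => M1 k j | inr j => M2 k j end.
pose rk (m : 'I_r') (i : 'I_N) : 'I_R := enum_rank ((m, i) : RowT).
pose M' (m : 'I_r') (c : 'I_#|{: W}|) : P2 :=
  alpha_sum pos_pair_add s0 (fun i : 'I_N => M (rk m i) (enum_val c i)) setT.
have setTN : (setT : {set 'I_N}) != set0.
  by rewrite -cards_eq0 cardsT card_ord -lt0n.
have cM' (c : P2 -> nat) (hc : forall a b, c (pos_pair_add a b) = c a + c b) m w :
    c (M' m (enum_rank w)) = \sum_i c (M (rk m i) (w i)).
  rewrite (sum_hom hc) // enum_rankK.
  by apply: eq_bigl => i; rewrite in_setT.
have [al [s [hal hs]]] := hr' M'.
pose P c := pos_pair_add s (alpha_sum pos_pair_add s (fun m => M' m c) al).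
pose chi (w : W) := pb (B1 (P (enum_rank w))).
have [lam [[i0 hi0] mono]] := HN bool (eq_leq card_bool) chi.
pose Ga : {set 'I_N} := [set i | lam i == None].
pose al' : {set 'I_R} := [set enum_rank p | p in setX al Ga].
have hal' : al' != set0.
  have [m0 hm0] := set0Pn _ hal; apply/set0Pn; exists (rk m0 i0).
  by apply: imset_f; rewrite in_setX hm0 inE hi0 eqxx.
pose w0 := lpt lam ord0.
pose F (c : P2 -> nat) := \sum_(m in al) \sum_(i in ~: Ga) c (M (rk m i) (w0 i)).
pose s' : P2 := (Pos.of_nat (c1 s + F c1), Pos.of_nat (c2 s + F c2)).
have gen (c : P2 -> nat) (hc : forall a b, c (pos_pair_add a b) = c a + c b)
    (hs' : c s' = c s + F c) x :
    c (P (enum_rank (lpt lam x))) =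
    c (pos_pair_add s' (alpha_sum pos_pair_add s' (fun k => M k x) al')).
  rewrite !hc !(sum_hom hc) // hs' -addnA; congr (_ + _).
  under eq_bigr do rewrite (cM' c hc).
  rewrite big_imset /=; last by move=> p q _ _; apply: enum_rank_inj.
  rewrite (eq_bigl (fun p : RowT => (p.1 \in al) && (p.2 \in Ga))); last first.
    by case=> m i; rewrite in_setX.
  rewrite (eq_bigr (fun p : RowT => c (M (rk p.1 p.2) x))); last by case.
  rewrite -(pair_big (fun m => m \in al) (fun i => i \in Ga) (fun m i => c (M (rk m i) x))) /=.
  rewrite /F -big_split /=; apply: eq_bigr => m _.
  rewrite (bigID (fun i => i \in Ga)) /= addnC; congr (_ + _).
    apply: eq_big => [i|i hi]; first by rewrite in_setC.
    by rewrite /w0 /lpt !ffunE; move: hi; rewrite inE; case: (lam i).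
  by apply: eq_bigr => i hi; rewrite /lpt ffunE; move: hi; rewrite inE => /eqP ->.
have c1s : 0 < c1 s + F c1 by rewrite /c1 addn_gt0 pos_gt0.
have c2s : 0 < c2 s + F c2 by rewrite /c2 addn_gt0 pos_gt0.
have eqP2 x : P (enum_rank (lpt lam x)) =
    pos_pair_add s' (alpha_sum pos_pair_add s' (fun k => M k x) al').
  apply: P2_eq; apply: gen.
  - exact: c1_add.
  - by rewrite /c1 /= of_natK.
  - exact: c2_add.
  - by rewrite /c2 /= of_natK.
have monob x : chi (lpt lam x) = chi w0 := mono x ord0.
case hb: (chi w0).
- apply: (hM1 al' s' hal') => j.
  have h := monob (lshift n2 j); rewrite hb in h.
  have := pbT h; rewrite eqP2.
  have -> // : (fun k => M k (lshift n2 j)) = (fun k => M1 k j).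
  apply: boolp.funext => k; rewrite /M.
  by have /= -> := unsplitK (inl _ j : 'I_n1.+1 + 'I_n2).
- apply: (hM2 al' s' hal') => j.
  have h := monob (rshift n1.+1 j); rewrite hb in h.
  have := hs (enum_rank (lpt lam (rshift n1.+1 j))).
  case=> [hB1|]; first by exfalso; apply: (pbF h).
  rewrite -/(P _) eqP2.
  have -> // : (fun k => M k (rshift n1.+1 j)) = (fun k => M2 k j).
  apply: boolp.funext => k; rewrite /M.
  by have /= -> := unsplitK (inr _ j : 'I_n1.+1 + 'I_n2).
Qed.

Definition CRF (D : P2 -> Prop) := ~ CR_set pos_pair_add (fun x => ~ D x).

Lemma CR_list (l : seq (P2 -> Prop)) (E : P2 -> Prop) :
  CR_set pos_pair_add E -> allin CRF l -> exists x, E x /\ interl l x.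
Proof.
elim: l E => [|D l IH] E hE /=.
  have [x hx] := @CR_ne _ _ (1%positive, 1%positive) _ hE; by exists x.
move=> [hD hl].
have : CR_set pos_pair_add (fun x => (E x /\ D x) \/ (E x /\ ~ D x)).
  apply: (CR_mono hE) => x Ex; case: (classic (D x)) => h; [left|right]; by split.
case/CR_union => [hED|hEnD].
  have [x [[Ex Dx] ix]] := IH _ hED hl; by exists x.
exfalso; apply: hD; apply: (CR_mono hEnD) => x []; done.
Qed.

Lemma pair_addA (x y z : P2) :
  pos_pair_add x (pos_pair_add y z) = pos_pair_add (pos_pair_add x y) z.
Proof. by rewrite /pos_pair_add /= !Pos.add_assoc. Qed.

Lemma pair_addC (x y : P2) : pos_pair_add x y = pos_pair_add y x.
Proof. by rewrite /pos_pair_add Pos.add_comm [(x.2 + _)%positive]Pos.add_comm. Qed.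

Lemma uf_posfin (S : Type) (u : (S -> Prop) -> Prop) (E : positive -> S -> Prop) l :
  ultrafilter u -> (forall i, (i <= l)%positive -> u (E i)) ->
  u (fun y => forall i, (i <= l)%positive -> E i y).
Proof.
move=> hu; elim/Pos.peano_ind: l => [|l IH] h.
  apply: (uf_S hu (h 1%positive (Pos.le_refl _))) => y hy i hi.
  by have -> : i = 1%positive by lia.
have := uf_I hu (IH (fun i hi => h i ltac:(lia))) (h (Pos.succ l) (Pos.le_refl _)).
move=> hh; apply: (uf_S hu hh) => y [h1 h2] i hi.
have [e|hil] : i = Pos.succ l \/ (i <= l)%positive by lia.
  by rewrite e.
exact: h1.
Qed.

Theorem theorem9 (A : positive -> Prop) (l : positive) :
  essential_CR_set Pos.add A ->
  essential_CR_set pos_pair_add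
    (fun ab : positive * positive =>
       A ab.1 /\
       forall i : positive, (i <= l)%positive -> A (ab.1 + i * ab.2)%positive).
Proof.
move=> [p [[hp pCR] pid pA]].
pose T0 := fun D : P2 -> Prop => CRF D \/ exists B, p B /\ forall x, CB l B x -> D x.
have ufCR u : UF T0 u -> forall B, u B -> CR_set pos_pair_add B.
  move=> [hu uT] B uB; apply: NNPP => nB.
  have : u (fun x => ~ B x).
    apply: uT; left => h; apply: nB; apply: (CR_mono h) => x; exact: NNPP.
  exact: (uf_nC hu uB).
have [q [[hq qT] qid]] : exists q, UF T0 q /\ ultra_idempotent pos_pair_add q.
  apply: (ellis pair_addA).
    apply: FIP_UF => L hL.
    have [B [pB [L' [hL' hx]]]] : exists B, p B /\ exists L', allin CRF L' /\
        forall x, CB l B x -> interl L' x -> interl L x.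
      elim: L hL => [|D L IH] /=.
        by move=> _; exists (fun _ => True); split; [exact: uf_T|exists [::]].
      move=> [[hD|[B0 [pB0 hB0]]] /IH [B [pB [L' [hL' hx]]]]].
        exists B; split => //; exists (D :: L'); split => //= x hB [Dx iL]; split => //.
        exact: hx.
      exists (fun x => B x /\ B0 x); split; first exact: uf_I.
      exists L'; split => // x [[h1 h2] h3] iL; split.
        by apply: hB0; split => // i hi; case: (h3 i hi).
      by apply: hx => //; split => // i hi; case: (h3 i hi).
    have [x [hxB ix]] := CR_list (CB_CR l (pCR B pB)) hL'.
    by exists x; apply: hx.
  move=> u v Uu Uv; have [hu uT] := Uu; have [hv vT] := Uv.
  split; first exact: uf_add.
  move=> D [hD|[B [pB hB]]].
    apply: NNPP => nD.
    have hnD := uf_C (@uf_add _ pos_pair_add _ _ hu hv) nD.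
    exact: hD (CR_sum pair_addA pair_addC hu (ufCR u Uu) hv hnD).
  pose Bst := fun a => B a /\ p (fun y => B (a + y)%positive).
  have pBst : p Bst by apply: uf_I => //; apply/(pid B).
  have uC : u (CB l Bst) by apply: uT; right; exists Bst; split.
  apply: (uf_S hu uC) => -[a d] [[Ba pa] hi] /=.
  pose B' := fun y => B y /\ B (a + y)%positive /\
     forall i, (i <= l)%positive -> B (a + i * d + y)%positive.
  have pB' : p B'.
    apply: uf_I => //; apply: uf_I => //.
    by apply: (uf_posfin (E := fun i y => B (a + i * d + y)%positive)) => // i hil; case: (hi i hil).
  have vC : v (CB l B') by apply: vT; right; exists B'; split.
  apply: (uf_S hv vC) => -[c e] [[_ [B'c2 _]] hi'].
  apply: hB; split => /=; first exact: B'c2.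
  move=> i hil; have [_ [_ h3]] := hi' i hil; have := h3 i hil.
  have -> : (a + c + i * (d + e))%positive = (a + i * d + (c + i * e))%positive.
    by apply: Pos2Nat.inj; rewrite !Pos2Nat.inj_add !Pos2Nat.inj_mul Pos2Nat.inj_add; lia.
  done.
exists q; split => //.
  by split => //; exact: ufCR (conj hq qT).
by apply: qT; right; exists A; split.
Qed.
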